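(* Let $(\mathcal{K},[\cdot,\cdot])$ be a Krein space with fundamental symmetry $J$ and let $\{k_n\}_{n\in\mathfrak{N}}$ ($\mathfrak{N}$ a countable index set) be a tight frame for the Krein space $\mathcal{K}$ with frame bounds $A=B=1$, i.e. $\sum_{n\in\mathfrak{N}}|[k_n,k]|^2=\|k\|_J^2$ for all $k\in\mathcal{K}$. Assume that $|[k_n,k_n]|=1$ for all $n\in\mathfrak{N}$. Then $\{k_n\}_{n\in\mathfrak{N}}$ is a $J$-orthonormal basis for $\mathcal{K}$.
   Context: A Krein space $(\mathcal{K},[\cdot,\cdot])$ has a fundamental decomposition $\mathcal{K}=\mathcal{K}_+\oplus\mathcal{K}_-$ and fundamental symmetry $J(k^++k^-)=k^+-k^-$, such that $[h,k]_J:=[h,Jk]$ is a positive definite inner product making $\mathcal{K}$ a Hilbert space; $\|k\|_J:=\sqrt{[k,k]_J}$. A $J$-orthonormal basis is a complete family $\{e_n\}_{n\in\mathfrak{N}}\subset\mathcal{K}$ (its closed linear span is $\mathcal{K}$) such that $[e_n,e_m]=0$ for $n\neq m$ and $|[e_n,e_n]|=1$ for all $n$. *)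

(* Defs.v *)
From HB Require Import structures.
From mathcomp Require Import all_boot all_order all_algebra.
From mathcomp Require Import all_classical all_reals.
From mathcomp Require Import ereal esum.
From mathcomp.real_closed Require Import complex.

Set Implicit Arguments.
Unset Strict Implicit.
Unset Printing Implicit Defensive.

Import Order.TTheory GRing.Theory Num.Theory.
Local Open Scope ring_scope.
Local Open Scope complex_scope.

(* Complex Krein spaces, presented via a fundamental symmetry J:
   V is a complex vector space, kf = [.,.] is the indefinite inner product,
   J is the fundamental symmetry, and [h,k]_J := [h, J k]. *)
Section Krein.
Variables (R : realType) (V : lmodType R[i]).
Variables (kf : V -> V -> R[i]) (J : V -> V).

Definition Jip (h k : V) : R[i] := kf h (J k).

(* ||k||_J := sqrt [k,k]_J  ([k,k]_J is real and nonnegative) *)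
Definition normJ (k : V) : R := Num.sqrt (complex.Re (Jip k k)).

Definition sqabs (z : R[i]) : R := Normc.normc z ^+ 2.

Definition is_krein_space : Prop :=
  (forall (a : R[i]) (x y z : V), kf (a *: x + y) z = a * kf x z + kf y z) /\
  (forall x y : V, kf y x = (kf x y)^*) /\
  (forall (a : R[i]) (x y : V), J (a *: x + y) = a *: J x + J y) /\
  (forall x : V, J (J x) = x) /\
  (forall x y : V, kf (J x) y = kf x (J y)) /\
  (forall x : V, x != 0 -> 0 < Jip x x) /\
  (forall u : nat -> V,
     (forall eps : R, 0 < eps -> exists N : nat, forall m n : nat,
        (N <= m)%N -> (N <= n)%N -> normJ (u m - u n) < eps) ->
     exists x : V, forall eps : R, 0 < eps -> exists N : nat, forall n : nat,
        (N <= n)%N -> normJ (u n - x) < eps).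

Definition parseval_frame (I : countType) (k : I -> V) : Prop :=
  forall x : V,
    (\esum_(n in [set: I]) (sqabs (kf (k n) x))%:E)%E = ((normJ x) ^+ 2)%:E.

(* the closed linear span of the family e is the whole space: every vector
   is a J-norm limit of finite linear combinations of the e n *)
Definition complete_family (I : Type) (e : I -> V) : Prop :=
  forall (x : V) (eps : R), 0 < eps ->
    exists (s : seq I) (c : I -> R[i]),
      normJ (x - \sum_(n <- s) c n *: e n) < eps.

Definition J_orthonormal_basis (I : Type) (e : I -> V) : Prop :=
  complete_family e /\
  (forall n m : I, n <> m -> kf (e n) (e m) = 0) /\
  (forall n : I, sqabs (kf (e n) (e n)) = 1).

End Krein.

(* Main.v *)
Require Import Defs.
From HB Require Import structures.
From mathcomp Require Import all_boot all_order all_algebra.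
From mathcomp Require Import all_classical all_reals.
From mathcomp Require Import ereal esum.
From mathcomp.real_closed Require Import complex.
From mathcomp Require Import lra.
Import Order.TTheory GRing.Theory Num.Theory.
Local Open Scope ring_scope.
Local Open Scope complex_scope.
Local Open Scope classical_set_scope.

Section S.
Context (R : realType) (V : lmodType R[i]) (kf : V -> V -> R[i]) (J : V -> V)
  (hK : is_krein_space kf J).

Lemma kfDl x y z : kf (x + y) z = kf x z + kf y z.
Proof. case: hK => lin _. have := lin 1 x y z. by rewrite scale1r mul1r. Qed.

Lemma kf0l z : kf 0 z = 0.
Proof.
have := kfDl 0 0 z; rewrite addr0 => /(congr1 (fun t => t - kf 0 z)).
by rewrite subrr addrK.
Qed.

Lemma kfZl a x z : kf (a *: x) z = a * kf x z.
Proof. by case: hK => lin _; rewrite -[a *: x]addr0 lin kf0l addr0. Qed.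

Lemma kfNl x z : kf (- x) z = - kf x z.
Proof. by rewrite -scaleN1r kfZl mulN1r. Qed.

Lemma kfC x y : kf y x = (kf x y)^*.
Proof. by case: hK => _ [h _]; apply: h. Qed.

Lemma JipC x y : Jip kf J y x = (Jip kf J x y)^*.
Proof.
case: hK => _ [_ [_ [_ [Js _]]]].
by rewrite /Jip kfC -Js.
Qed.

Lemma JipBl x y z : Jip kf J (x - y) z = Jip kf J x z - Jip kf J y z.
Proof. by rewrite /Jip kfDl kfNl. Qed.

Lemma JipBr x y z : Jip kf J z (x - y) = Jip kf J z x - Jip kf J z y.
Proof. by rewrite JipC JipBl rmorphB /= -!JipC. Qed.

Lemma Jip_suml (I : Type) (s : seq I) (c : I -> R[i]) (e : I -> V) z :
  Jip kf J (\sum_(n <- s) c n *: e n) z = \sum_(n <- s) c n * Jip kf J (e n) z.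
Proof.
elim: s => [|a s IH]; first by rewrite !big_nil /Jip kf0l.
by rewrite !big_cons /Jip kfDl kfZl -IH.
Qed.

Lemma Jip_sumr (I : Type) (s : seq I) (c : I -> R[i]) (e : I -> V) z :
  Jip kf J z (\sum_(n <- s) c n *: e n) = \sum_(n <- s) (c n)^* * Jip kf J z (e n).
Proof.
rewrite JipC Jip_suml rmorph_sum; apply: eq_bigr => n _.
by rewrite rmorphM /= -JipC.
Qed.

Lemma Jip_ge0 x : 0 <= Jip kf J x x.
Proof.
case: hK => _ [_ [_ [_ [_ [pos _]]]]].
have [->|/pos/ltW//] := eqVneq x 0.
by rewrite /Jip kf0l.
Qed.

Lemma normJ2 x : ((normJ kf J x) ^+ 2)%:C = Jip kf J x x.
Proof.
have h := Jip_ge0 x.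
rewrite /normJ sqr_sqrtr; last by move: h; rewrite lecE /= => /andP[].
rewrite [RHS]complexE (ger0_Im h) mulr0 addr0 //.
Qed.

Lemma Jip_J x : Jip kf J (J x) (J x) = Jip kf J x x.
Proof.
case: hK => _ [_ [_ [JJ [Js _]]]].
rewrite /Jip JJ kfC; apply: conj_Creal; apply: ger0_real; exact: (Jip_ge0 x).
Qed.

Lemma sqabsC (z : R[i]) : (sqabs z)%:C = z * z^*.
Proof.
case: z => a b; rewrite /sqabs /Normc.normc sqr_sqrtr; last by rewrite addr_ge0 ?sqr_ge0.
by rewrite (add_Re2_Im2 (a +i* b)) normCK.
Qed.

End S.
Lemma fin_le (R : realType) (I : countType) (f : I -> R) (N : R) :
  (\esum_(n in [set: I]) (f n)%:E = N%:E)%E ->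
  forall s, uniq s -> \sum_(n <- s) f n <= N.
Proof.
move=> H s us; rewrite -lee_fin -sumEFin -H; apply: esum_ge.
exists [set` s]; first by split; [exact: finite_seq|].
by rewrite fsbig_seq.
Qed.

Lemma fin_gt (R : realType) (I : countType) (f : I -> R) (N eps : R) :
  (\esum_(n in [set: I]) (f n)%:E = N%:E)%E -> 0 < eps ->
  exists s, uniq s /\ N - eps < \sum_(n <- s) f n.
Proof.
move=> H e0.
have : ((N - eps)%:E < \esum_(n in [set: I]) (f n)%:E)%E.
  by rewrite H lte_fin; lra.
move/ereal_sup_gt => [y [A [finA _] <-]].
rewrite fsbig_finite // sumEFin lte_fin => lt.
by exists (finmap.enum_fset (fset_set A)); split => //; exact: finmap.fset_uniq.
Qed.

Lemma sqabs0 (R : realType) (z : R[i]) : sqabs z = 0 -> z = 0.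
Proof.
move=> h; have := sqabsC _ z; rewrite h => /esym/eqP.
by rewrite mulf_eq0 conjc_eq0 orbb => /eqP.
Qed.

Lemma sqabs_ge0 (R : realType) (z : R[i]) : 0 <= sqabs z.
Proof. exact: sqr_ge0. Qed.

Lemma sqabs_real (R : realType) (t : R) : sqabs t%:C = t ^+ 2.
Proof.
apply: complexI; rewrite sqabsC conj_Creal; last by rewrite (complex_real t 0).
by rewrite rmorphXn expr2.
Qed.

Theorem proposition3p9 (R : realType) (V : lmodType R[i])
    (kf : V -> V -> R[i]) (J : V -> V) (I : countType) (k : I -> V) :
  is_krein_space kf J ->
  parseval_frame kf J k ->
  (forall n : I, sqabs (kf (k n) (k n)) = 1) ->
  J_orthonormal_basis kf J k.
Proof.
move=> hK PF H1.
have nJJ y : normJ kf J (J y) ^+ 2 = normJ kf J y ^+ 2.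
  by apply: complexI; rewrite !normJ2 // Jip_J.
have nJ1 m : normJ kf J (k m) ^+ 2 = 1.
  set t := normJ kf J (k m) ^+ 2.
  have t0 : 0 <= t by exact: sqr_ge0.
  have h1 := fin_le _ _ _ _ (PF (k m)) [:: m] isT.
  rewrite big_seq1 H1 in h1.
  have h2 := fin_le _ _ _ _ (PF (J (k m))) [:: m] isT.
  rewrite big_seq1 nJJ -/t in h2.
  have e : kf (k m) (J (k m)) = t%:C by rewrite normJ2.
  rewrite e sqabs_real in h2.
  rewrite -/t in h1; clearbody t.
  have : t <= 1 by nra.
  lra.
have Jkk m : Jip kf J (k m) (k m) = 1 by rewrite -normJ2 // nJ1.
have orth n m : n != m -> kf (k n) (k m) = 0 /\ Jip kf J (k n) (k m) = 0.
  move=> nm.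
  have us : uniq [:: m; n] by rewrite /= inE eq_sym nm.
  have h1 := fin_le _ _ _ _ (PF (k m)) _ us.
  rewrite !big_cons big_nil H1 nJ1 in h1.
  have h2 := fin_le _ _ _ _ (PF (J (k m))) _ us.
  rewrite !big_cons big_nil nJJ nJ1 in h2.
  have e : kf (k m) (J (k m)) = 1%:C by rewrite -[kf _ _]/(Jip kf J (k m) (k m)) Jkk.
  rewrite e sqabs_real expr1n in h2.
  have g1 := sqabs_ge0 _ (kf (k n) (k m)).
  have g2 := sqabs_ge0 _ (kf (k n) (J (k m))).
  split; apply: sqabs0; lra.
have orthJ n m : Jip kf J (k n) (k m) = (m == n)%:R.
  have [->|nm] := eqVneq m n; first by rewrite Jkk.
  rewrite eq_sym in nm; by rewrite (proj2 (orth n m nm)).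
split; last split => //; last by move=> n m /eqP nm; case: (orth n m nm).
move=> x eps e0.
have [s [us hs]] := fin_gt _ _ _ _ _ (PF (J x)) (mulr_gt0 e0 e0).
rewrite nJJ in hs.
exists s, (fun n => Jip kf J x (k n)).
set c := fun n => Jip kf J x (k n).
set w := \sum_(n <- s) c n *: k n.
have cC n : Jip kf J (k n) x = (c n)^* by rewrite JipC.
have S1 : Jip kf J w x = \sum_(n <- s) c n * (c n)^*.
  by rewrite Jip_suml //; apply: eq_bigr => n _; rewrite cC.
have S2 : Jip kf J x w = \sum_(n <- s) c n * (c n)^*.
  by rewrite Jip_sumr //; apply: eq_bigr => n _; rewrite mulrC.
have S3 : Jip kf J w w = \sum_(n <- s) c n * (c n)^*.
  rewrite Jip_suml // big_seq [RHS]big_seq; apply: eq_bigr => n ns.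
  rewrite Jip_sumr // (bigD1_seq n) //= orthJ eqxx mulr1 big1 ?addr0 //.
  by move=> m /negbTE mn; rewrite orthJ mn mulr0.
have S4 : (\sum_(n <- s) sqabs (kf (k n) (J x)))%:C = \sum_(n <- s) c n * (c n)^*.
  rewrite rmorph_sum; apply: eq_bigr => n _.
  change ((sqabs (kf (k n) (J x)))%:C = c n * (c n)^*).
  by rewrite sqabsC -[kf _ _]/(Jip kf J (k n) x) cC conjCK mulrC.
have key : (normJ kf J (x - w) ^+ 2)%:C
    = (normJ kf J x ^+ 2 - \sum_(n <- s) sqabs (kf (k n) (J x)))%:C.
  rewrite rmorphB /= S4 !normJ2 // JipBl // !JipBr // S1 S2 S3.
  by rewrite subrr subr0.
have {}key := complexI key.
have g := sqrtr_ge0 (complex.Re (Jip kf J (x - w) (x - w))).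
rewrite -/(normJ kf J (x - w)) in g.
nra.
Qed.
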